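(* Let $\mathbf C$ be an admissible site and $\alpha$ an infinite cardinal. For a pro-covering morphism $f:V\to U$ and an object $W$ in $\mathrm{Pro}_\alpha\mathbf C$, the diagram \[{\rm Mor}(U,W)\to{\rm Mor}(V,W)\rightrightarrows{\rm Mor}(V\times_UV,W)\] is an equalizer of sets.
   Context: A coherent site is a small category with finite limits and a topology generated by finite coverings; a covering morphism is a morphism generating a covering sieve. $\mathbf C$ is admissible if its topology is subcanonical, finite coproducts $C=\coprod_iC_i$ exist with $\{C_i\to C\}$ a covering, there is a strict initial object, and finite coproducts are disjoint and stable under pullback. $\mathrm{Pro}_\alpha\mathbf C$ is the category whose objects are functors $F:I\to\mathbf C$ with $I$ a cofiltered category with at most $\alpha$ morphisms and ${\rm Mor}(F,G)=\lim_j\operatorname{colim}_i{\rm Mor}_{\mathbf C}(F(i),G(j))$. A morphism $f:V\to U$ in $\mathrm{Pro}_\alpha\mathbf C$ is a pro-covering morphism if it has a level representation $(V_i\to U_i)_{i\in I}$ by covering morphisms of $\mathbf C$. *)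

(* Defs.v *)
From Stdlib Require Vectors.Fin.
#[local] Set Warnings "-warn-library-file-stdlib-vector".

Set Implicit Arguments.
Unset Strict Implicit.

Record Category := {
  Obj :> Type;
  Hom : Obj -> Obj -> Type;
  idm : forall X, Hom X X;
  comp : forall X Y Z, Hom Y Z -> Hom X Y -> Hom X Z;
  comp_idl : forall X Y (f : Hom X Y), comp (idm Y) f = f;
  comp_idr : forall X Y (f : Hom X Y), comp f (idm X) = f;
  comp_assoc : forall X Y Z T (h : Hom Z T) (g : Hom Y Z) (f : Hom X Y),
      comp h (comp g f) = comp (comp h g) f }.

Arguments Hom {c} X Y.
Arguments idm {c} X.
Arguments comp {c X Y Z} g f.

Record Functor (I C : Category) := {
  fobj :> I -> C;
  fmap : forall i j : I, Hom i j -> Hom (fobj i) (fobj j);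
  fmap_id : forall i : I, fmap (idm i) = idm (fobj i);
  fmap_comp : forall (i j k : I) (u : Hom j k) (v : Hom i j),
      fmap (comp u v) = comp (fmap u) (fmap v) }.

Arguments fmap {I C} f {i j} u.

Definition injective (X Y : Type) (e : X -> Y) : Prop :=
  forall x y, e x = e y -> x = y.

Section Cat.
Variable C : Category.

Definition is_iso (X Y : C) (f : Hom X Y) : Prop :=
  exists g : Hom Y X, comp g f = idm X /\ comp f g = idm Y.

Definition is_terminal (T : C) : Prop :=
  forall X : C, exists f : Hom X T, forall g : Hom X T, g = f.

Definition is_initial (O : C) : Prop :=
  forall X : C, exists f : Hom O X, forall g : Hom O X, g = f.

Definition is_pullback (X Y Z : C) (f : Hom X Z) (g : Hom Y Z)
    (P : C) (p1 : Hom P X) (p2 : Hom P Y) : Prop :=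
  comp f p1 = comp g p2 /\
  forall (Q : C) (q1 : Hom Q X) (q2 : Hom Q Y), comp f q1 = comp g q2 ->
    exists m : Hom Q P, (comp p1 m = q1 /\ comp p2 m = q2) /\
      forall m' : Hom Q P, comp p1 m' = q1 -> comp p2 m' = q2 -> m' = m.

Definition has_finite_limits : Prop :=
  (exists T : C, is_terminal T) /\
  forall (X Y Z : C) (f : Hom X Z) (g : Hom Y Z),
    exists (P : C) (p1 : Hom P X) (p2 : Hom P Y), is_pullback f g p1 p2.

Definition is_coproduct (n : nat) (Xs : Fin.t n -> C) (Cp : C)
    (inj : forall i, Hom (Xs i) Cp) : Prop :=
  forall (Z : C) (h : forall i, Hom (Xs i) Z),
    exists m : Hom Cp Z, (forall i, comp m (inj i) = h i) /\
      forall m' : Hom Cp Z, (forall i, comp m' (inj i) = h i) -> m' = m.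
Arguments is_coproduct {n} Xs Cp inj.

Definition sieve (U : C) := forall X : C, Hom X U -> Prop.

Definition is_sieve (U : C) (S : sieve U) : Prop :=
  forall (X Y : C) (h : Hom X U) (g : Hom Y X), S X h -> S Y (comp h g).

Definition topology_data := forall U : C, sieve U -> Prop.

Definition pullback_sieve (U V : C) (g : Hom V U) (S : sieve U) : sieve V :=
  fun X h => S X (comp g h).

Definition is_topology (J : topology_data) : Prop :=
  (forall U S, J U S -> is_sieve S) /\
  (forall U, J U (fun _ _ => True)) /\
  (forall U V (g : Hom V U) (S : sieve U), J U S -> J V (pullback_sieve g S)) /\
  (forall U (S R : sieve U), J U S -> is_sieve R ->
     (forall V (h : Hom V U), S V h -> J V (pullback_sieve h R)) -> J U R).

Record FinFam (U : C) := {
  ff_n : nat;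
  ff_dom : Fin.t ff_n -> C;
  ff_map : forall i, Hom (ff_dom i) U }.
Arguments ff_n {U} f.
Arguments ff_dom {U} f i.
Arguments ff_map {U} f i.

Definition gen_sieve (U : C) (F : FinFam U) : sieve U :=
  fun X h => exists (i : Fin.t (ff_n F)) (g : Hom X (ff_dom F i)),
    h = comp (ff_map F i) g.

Definition sieve_of (V U : C) (f : Hom V U) : sieve U :=
  fun X h => exists g : Hom X V, h = comp f g.

Definition generated_by (J : topology_data) (Cov : forall U : C, FinFam U -> Prop)
  : Prop :=
  forall U (S : sieve U),
    J U S <-> (forall J' : topology_data, is_topology J' ->
                 (forall U' (F : FinFam U'), Cov U' F -> J' U' (gen_sieve F)) ->
                 J' U S).

Definition covering_morphism (J : topology_data) (V U : C) (f : Hom V U) : Prop :=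
  J U (sieve_of f).

Definition coherent_site (J : topology_data) : Prop :=
  has_finite_limits /\ is_topology J /\
  exists Cov : forall U : C, FinFam U -> Prop, generated_by J Cov.

Definition subcanonical (J : topology_data) : Prop :=
  forall (U : C) (S : sieve U), J U S ->
  forall (W : C) (x : forall (X : C) (h : Hom X U), S X h -> Hom X W),
    (forall (X Y : C) (h : Hom X U) (g : Hom Y X) (H : S X h) (H' : S Y (comp h g)),
        x Y (comp h g) H' = comp (x X h H) g) ->
    exists m : Hom U W, (forall X h (H : S X h), comp m h = x X h H) /\
      forall m' : Hom U W, (forall X h (H : S X h), comp m' h = x X h H) -> m' = m.

Definition admissible (J : topology_data) : Prop :=
  coherent_site J /\
  subcanonical J /\
  (forall (n : nat) (Xs : Fin.t n -> C),
     exists (Cp : C) (inj : forall i, Hom (Xs i) Cp), is_coproduct Xs Cp inj) /\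
  (forall (n : nat) (Xs : Fin.t n -> C) (Cp : C) (inj : forall i, Hom (Xs i) Cp),
     is_coproduct Xs Cp inj ->
     J Cp (gen_sieve (@Build_FinFam Cp n Xs inj))) /\
  (exists O : C, is_initial O /\ forall (X : C) (f : Hom X O), is_iso f) /\
  (forall (n : nat) (Xs : Fin.t n -> C) (Cp : C) (inj : forall i, Hom (Xs i) Cp),
     is_coproduct Xs Cp inj ->
     forall i j, i <> j ->
     forall (P : C) (p1 : Hom P (Xs i)) (p2 : Hom P (Xs j)),
       is_pullback (inj i) (inj j) p1 p2 -> is_initial P) /\
  (forall (n : nat) (Xs : Fin.t n -> C) (Cp : C) (inj : forall i, Hom (Xs i) Cp),
     is_coproduct Xs Cp inj ->
     forall (Y : C) (g : Hom Y Cp) (Ps : Fin.t n -> C)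
            (q : forall i, Hom (Ps i) Y) (r : forall i, Hom (Ps i) (Xs i)),
       (forall i, is_pullback g (inj i) (q i) (r i)) ->
       is_coproduct Ps Y q).

End Cat.

Definition cofiltered (I : Category) : Prop :=
  inhabited (Obj I) /\
  (forall i j : I, exists (k : I) (u : Hom k i) (v : Hom k j), True) /\
  (forall (i j : I) (u v : Hom i j), exists (k : I) (w : Hom k i), comp u w = comp v w).

(* the cardinal alpha is represented by a type A; "at most alpha morphisms" *)
Definition at_most_card (A : Type) (I : Category) : Prop :=
  exists e : {i : I & {j : I & Hom i j}} -> A, injective e.

Definition infinite_type (A : Type) : Prop :=
  exists e : nat -> A, injective e.

Record ProObj (C : Category) (A : Type) := {
  pidx : Category;
  pidx_cof : cofiltered pidx;
  pidx_small : at_most_card A pidx;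
  pdiag : Functor pidx C }.

Arguments pidx {C A} p.
Arguments pdiag {C A} p.

Section Pro.
Variables (C : Category) (A : Type).

(* elements of colim_i Mor_C(F(i), X) are represented by pairs (i, a) *)
Definition colim_elt (F : ProObj C A) (X : C) :=
  {i : pidx F & Hom (pdiag F i) X}.

(* the equivalence relation defining the (filtered) colimit *)
Definition colim_rel (F : ProObj C A) (X : C) (a b : colim_elt F X) : Prop :=
  exists (k : pidx F) (u : Hom k (projT1 a)) (v : Hom k (projT1 b)),
    comp (projT2 a) (fmap (pdiag F) u) = comp (projT2 b) (fmap (pdiag F) v).

(* raw family: one representative in colim_i Mor(F i, G j) for each j *)
Definition raw_mor (F G : ProObj C A) := forall j : pidx G, colim_elt F (pdiag G j).

(* elements of lim_j colim_i Mor(F i, G j): compatible raw families *)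
Record ProHom (F G : ProObj C A) := {
  ph : raw_mor F G;
  ph_compat : forall (j j' : pidx G) (t : Hom j j'),
      colim_rel (existT _ (projT1 (ph j)) (comp (fmap (pdiag G) t) (projT2 (ph j))))
                (ph j') }.

Arguments ph {F G} p j.

Definition raw_eq (F G : ProObj C A) (r s : raw_mor F G) : Prop :=
  forall j, colim_rel (r j) (s j).

Definition pro_eq (F G : ProObj C A) (f g : ProHom F G) : Prop :=
  raw_eq (ph f) (ph g).

Definition rcomp (F G H : ProObj C A) (g : raw_mor G H) (f : raw_mor F G)
  : raw_mor F H :=
  fun k => existT _ (projT1 (f (projT1 (g k))))
                    (comp (projT2 (g k)) (projT2 (f (projT1 (g k))))).

Definition raw_id (F : ProObj C A) : raw_mor F F :=
  fun j => existT _ j (idm (pdiag F j)).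
Arguments raw_id F : clear implicits.

Definition pro_iso (F G : ProObj C A) (f : ProHom F G) : Prop :=
  exists g : ProHom G F,
    raw_eq (rcomp (ph g) (ph f)) (raw_id F) /\
    raw_eq (rcomp (ph f) (ph g)) (raw_id G).

Definition is_pro_pullback (X Y Z : ProObj C A) (f : ProHom X Z) (g : ProHom Y Z)
    (P : ProObj C A) (p1 : ProHom P X) (p2 : ProHom P Y) : Prop :=
  raw_eq (rcomp (ph f) (ph p1)) (rcomp (ph g) (ph p2)) /\
  forall (Q : ProObj C A) (q1 : ProHom Q X) (q2 : ProHom Q Y),
    raw_eq (rcomp (ph f) (ph q1)) (rcomp (ph g) (ph q2)) ->
    exists m : ProHom Q P,
      (raw_eq (rcomp (ph p1) (ph m)) (ph q1) /\ raw_eq (rcomp (ph p2) (ph m)) (ph q2)) /\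
      forall m' : ProHom Q P,
        raw_eq (rcomp (ph p1) (ph m')) (ph q1) ->
        raw_eq (rcomp (ph p2) (ph m')) (ph q2) -> pro_eq m' m.

Definition level_obj (I : Category) (HI : cofiltered I) (HA : at_most_card A I)
    (X : Functor I C) : ProObj C A :=
  {| pidx := I; pidx_cof := HI; pidx_small := HA; pdiag := X |}.

Definition level_raw (I : Category) (HI : cofiltered I) (HA : at_most_card A I)
    (X Y : Functor I C) (phi : forall i : I, Hom (X i) (Y i))
  : raw_mor (level_obj HI HA X) (level_obj HI HA Y) :=
  fun i => existT _ i (phi i).

Definition natural (I : Category) (X Y : Functor I C)
    (phi : forall i : I, Hom (X i) (Y i)) : Prop :=
  forall (i j : I) (u : Hom i j), comp (fmap Y u) (phi i) = comp (phi j) (fmap X u).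

(* f : V -> U is a pro-covering morphism: it has a level representation
   (V_i -> U_i)_{i in I} by covering morphisms, i.e. f is isomorphic, in the
   arrow category of Pro_alpha C, to the morphism induced by a natural
   transformation between I-diagrams whose components are covering morphisms *)
Definition pro_covering (J : topology_data C) (V U : ProObj C A) (f : ProHom V U)
  : Prop :=
  exists (I : Category) (HI : cofiltered I) (HA : at_most_card A I)
         (X Y : Functor I C) (phi : forall i : I, Hom (X i) (Y i)),
    natural phi /\
    (forall i, covering_morphism J (phi i)) /\
    exists (iV : ProHom V (level_obj HI HA X)) (iU : ProHom U (level_obj HI HA Y)),
      pro_iso iV /\ pro_iso iU /\
      raw_eq (rcomp (ph iU) (ph f)) (rcomp (@level_raw I HI HA X Y phi) (ph iV)).

End Pro.

Arguments ph {C A F G} p j.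

(* Main.v *)
Require Import Defs.
From Stdlib Require Import Setoid Morphisms.
From Stdlib Require Import IndefiniteDescription.
Set Implicit Arguments.
Unset Strict Implicit.

Section ProLemmas.
Variables (C : Category) (A : Type).
Notation PO := (ProObj C A).

Lemma fmap_comp' (I : Category) (F : Functor I C) (i j k : I) (u : Hom j k) (v : Hom i j)
  (Z : C) (a : Hom (F k) Z) :
  comp a (fmap F (comp u v)) = comp (comp a (fmap F u)) (fmap F v).
Proof. rewrite fmap_comp, comp_assoc. reflexivity. Qed.

Lemma colim_rel_refl (F : PO) (X : C) (a : colim_elt F X) : colim_rel a a.
Proof. exists (projT1 a), (idm _), (idm _). reflexivity. Qed.

Lemma colim_rel_eq (F : PO) (X : C) (a b : colim_elt F X) : a = b -> colim_rel a b.
Proof. intros ->; apply colim_rel_refl. Qed.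

Lemma colim_rel_sym (F : PO) (X : C) (a b : colim_elt F X) : colim_rel a b -> colim_rel b a.
Proof. intros (k & u & v & H). exists k, v, u. symmetry; exact H. Qed.

Lemma colim_rel_trans (F : PO) (X : C) (a b c : colim_elt F X) :
  colim_rel a b -> colim_rel b c -> colim_rel a c.
Proof.
  intros (k & u & v & H) (k' & u' & v' & H').
  destruct (pidx_cof F) as [_ [H2 H3]].
  destruct (H2 k k') as (m & w & w' & _).
  destruct (H3 _ _ (comp v w) (comp u' w')) as (n & e & He).
  exists n, (comp u (comp w e)), (comp v' (comp w' e)).
  rewrite (@fmap_comp' _ _ _ _ _ u (comp w e)), H, <- fmap_comp'.
  rewrite (comp_assoc v w e), He, <- comp_assoc.
  rewrite fmap_comp', H', <- fmap_comp'. reflexivity.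
Qed.

Definition post {F : PO} {X Y : C} (z : Hom X Y) (a : colim_elt F X) : colim_elt F Y :=
  existT _ (projT1 a) (comp z (projT2 a)).

Lemma post_congr (F : PO) (X Y : C) (z : Hom X Y) (a b : colim_elt F X) :
  colim_rel a b -> colim_rel (post z a) (post z b).
Proof.
  intros (k & u & v & H). exists k, u, v. simpl.
  rewrite <- !comp_assoc, H. reflexivity.
Qed.

Lemma post_post (F : PO) (X Y Z : C) (z : Hom Y Z) (z' : Hom X Y) (a : colim_elt F X) :
  post z (post z' a) = post (comp z z') a.
Proof. destruct a. unfold post; simpl. rewrite comp_assoc. reflexivity. Qed.

Lemma post_id (F : PO) (X : C) (a : colim_elt F X) : post (idm X) a = a.
Proof. destruct a. unfold post; simpl. rewrite comp_idl. reflexivity. Qed.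

Definition compat (F G : PO) (r : raw_mor F G) : Prop :=
  forall (j j' : pidx G) (t : Hom j j'), colim_rel (post (fmap (pdiag G) t) (r j)) (r j').

Lemma ph_compat' (F G : PO) (g : ProHom F G) : compat (ph g).
Proof. intros j j' t. exact (ph_compat g t). Qed.

Definition push {F G : PO} {X : C} (r : raw_mor F G) (b : colim_elt G X) : colim_elt F X :=
  post (projT2 b) (r (projT1 b)).

Lemma push_congr (F G : PO) (X : C) (r : raw_mor F G) (b b' : colim_elt G X) :
  compat r -> colim_rel b b' -> colim_rel (push r b) (push r b').
Proof.
  intros Hr (k & u & v & H). destruct b as [j β], b' as [j' β']. simpl in *.
  unfold push; simpl.
  eapply colim_rel_trans.
  { apply post_congr. apply colim_rel_sym. apply (Hr _ _ u). }
  rewrite post_post, H, <- post_post.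
  apply post_congr. apply Hr.
Qed.

Lemma push_post (F G : PO) (X Y : C) (r : raw_mor F G) (z : Hom X Y) (b : colim_elt G X) :
  push r (post z b) = post z (push r b).
Proof. destruct b. unfold push, post; simpl. rewrite comp_assoc. reflexivity. Qed.

Lemma rcomp_push (F G H : PO) (g : raw_mor G H) (f : raw_mor F G) k :
  rcomp g f k = push f (g k).
Proof. reflexivity. Qed.

Lemma rcomp_compat (F G H : PO) (g : raw_mor G H) (f : raw_mor F G) :
  compat g -> compat f -> compat (rcomp g f).
Proof.
  intros Hg Hf k k' t. rewrite !rcomp_push, <- push_post.
  apply push_congr; auto.
Qed.

Definition pcomp {F G H : PO} (g : ProHom G H) (f : ProHom F G) : ProHom F H :=
  @Build_ProHom C A F H (rcomp (ph g) (ph f))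
    (rcomp_compat (ph_compat' g) (ph_compat' f)).

Lemma raw_id_compat (F : PO) : compat (@raw_id C A F).
Proof.
  intros j j' t. exists j, (idm _), t. simpl. rewrite fmap_id, !comp_idr, comp_idl. reflexivity.
Qed.

Definition pid (F : PO) : ProHom F F :=
  @Build_ProHom C A F F (@raw_id C A F) (@raw_id_compat F).

Lemma pro_eq_refl (F G : PO) (f : ProHom F G) : pro_eq f f.
Proof. intro j; apply colim_rel_refl. Qed.
Lemma pro_eq_sym (F G : PO) (f g : ProHom F G) : pro_eq f g -> pro_eq g f.
Proof. intros H j; apply colim_rel_sym, H. Qed.
Lemma pro_eq_trans (F G : PO) (f g h : ProHom F G) : pro_eq f g -> pro_eq g h -> pro_eq f h.
Proof. intros H H' j; eapply colim_rel_trans; [apply H|apply H']. Qed.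

Global Instance pro_eq_Equiv (F G : PO) : Equivalence (@pro_eq C A F G).
Proof. split; red; eauto using pro_eq_refl, pro_eq_sym, pro_eq_trans. Qed.

Global Instance pcomp_Proper (F G H : PO) :
  Proper (@pro_eq C A G H ==> @pro_eq C A F G ==> @pro_eq C A F H) (@pcomp F G H).
Proof.
  intros g g' Hg f f' Hf k. unfold pcomp; simpl. rewrite !rcomp_push.
  eapply colim_rel_trans.
  - apply push_congr; [apply ph_compat'|apply Hg].
  - destruct (ph g' k) as [j z]. unfold push; simpl. apply post_congr, Hf.
Qed.

Lemma pcomp_assoc (F G H K : PO) (h : ProHom H K) (g : ProHom G H) (f : ProHom F G) :
  pro_eq (pcomp (pcomp h g) f) (pcomp h (pcomp g f)).
Proof.
  intro k. apply colim_rel_eq. unfold pcomp, rcomp; simpl.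
  rewrite comp_assoc. reflexivity.
Qed.

Lemma pcomp_id_l (F G : PO) (f : ProHom F G) : pro_eq (pcomp (pid G) f) f.
Proof.
  intro k. apply colim_rel_eq. unfold pcomp, rcomp, pid, raw_id; simpl.
  rewrite comp_idl. destruct (ph f k); reflexivity.
Qed.

Lemma pcomp_id_r (F G : PO) (f : ProHom F G) : pro_eq (pcomp f (pid F)) f.
Proof.
  intro k. apply colim_rel_eq. unfold pcomp, rcomp, pid, raw_id; simpl.
  rewrite comp_idr. destruct (ph f k); reflexivity.
Qed.

End ProLemmas.

Section Site.
Variables (C : Category) (J : topology_data C).
Hypothesis Hsub : subcanonical J.

Lemma cov_epi (V U W : C) (phi : Hom V U) (c c' : Hom U W) :
  covering_morphism J phi -> comp c phi = comp c' phi -> c = c'.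
Proof.
  intros Hcov Heq.
  destruct (Hsub Hcov (W:=W) (x := fun X h _ => comp c h)) as (m & Hm & Hu).
  { intros. apply comp_assoc. }
  transitivity m.
  - apply Hu. reflexivity.
  - symmetry. apply Hu. intros X h [g ->]. rewrite !comp_assoc, Heq. reflexivity.
Qed.

Lemma pb_factor (X Z P : C) (phi : Hom X Z) (p1 p2 : Hom P X) (W : C) (b : Hom X W) :
  is_pullback phi phi p1 p2 -> comp b p1 = comp b p2 ->
  forall Q (g g' : Hom Q X), comp phi g = comp phi g' -> comp b g = comp b g'.
Proof.
  intros [Hsq Hu] Hb Q g g' E.
  destruct (Hu Q g g' E) as (m & [<- <-] & _).
  rewrite !comp_assoc, Hb. reflexivity.
Qed.

Lemma cov_sheaf (V U P W : C) (phi : Hom V U) (p1 p2 : Hom P V) (b : Hom V W) :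
  covering_morphism J phi -> is_pullback phi phi p1 p2 -> comp b p1 = comp b p2 ->
  exists c, comp c phi = b.
Proof.
  intros Hcov Hpb Hb.
  pose (x := fun (X : C) (h : Hom X U) (H : sieve_of phi h) =>
          comp b (proj1_sig (constructive_indefinite_description _ H))).
  destruct (Hsub Hcov (W:=W) (x := x)) as (m & Hm & _).
  { intros X Y h g H H'. unfold x.
    destruct (constructive_indefinite_description _ H) as [g1 E1].
    destruct (constructive_indefinite_description _ H') as [g2 E2]. simpl.
    rewrite <- comp_assoc. apply (pb_factor Hpb Hb).
    rewrite <- E2, E1, comp_assoc. reflexivity. }
  exists m.
  assert (H0 : sieve_of phi phi) by (exists (idm V); symmetry; apply comp_idr).
  rewrite (Hm _ _ H0). unfold x.
  destruct (constructive_indefinite_description _ H0) as [g0 E0]. simpl.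
  rewrite <- (comp_idr b) at 2. apply (pb_factor Hpb Hb).
  rewrite <- E0, comp_idr. reflexivity.
Qed.

Lemma pb_uniq (X Y Z : C) (f : Hom X Z) (g : Hom Y Z) (P : C) (p1 : Hom P X) (p2 : Hom P Y) :
  is_pullback f g p1 p2 -> forall Q (m m' : Hom Q P),
  comp p1 m = comp p1 m' -> comp p2 m = comp p2 m' -> m = m'.
Proof.
  intros [Hsq Hu] Q m m' E1 E2.
  assert (E : comp f (comp p1 m) = comp g (comp p2 m)) by (rewrite !comp_assoc, Hsq; reflexivity).
  destruct (Hu Q _ _ E) as (m0 & _ & Hu0).
  transitivity m0; [apply Hu0; reflexivity| symmetry; apply Hu0; auto].
Qed.

Variable (A : Type).
Variables (I : Category) (HI : cofiltered I) (HA : at_most_card A I)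
  (X Y : Functor I C) (phi : forall i : I, Hom (X i) (Y i)).
Hypothesis Hnat : natural phi.
Hypothesis Hcov : forall i, covering_morphism J (phi i).
Hypothesis Hfl : has_finite_limits C.

Lemma level_compat (X' Y' : Functor I C) (psi : forall i : I, Hom (X' i) (Y' i)) :
  natural psi -> compat (@level_raw C A I HI HA X' Y' psi).
Proof.
  intros Hn j j' t. exists j, (idm _), t. simpl.
  rewrite fmap_id, comp_idr, Hn. reflexivity.
Qed.

Definition lvl (X' Y' : Functor I C) (psi : forall i : I, Hom (X' i) (Y' i))
  (Hn : natural psi) : ProHom (level_obj (A:=A) HI HA X') (level_obj (A:=A) HI HA Y') :=
  @Build_ProHom C A _ _ (level_raw psi) (level_compat Hn).

Notation LX := (level_obj (A:=A) HI HA X).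
Notation LY := (level_obj (A:=A) HI HA Y).
Definition Phi := lvl Hnat.

Lemma level_epi (Z : C) (b b' : colim_elt LY Z) :
  colim_rel (push (ph Phi) b) (push (ph Phi) b') -> colim_rel b b'.
Proof.
  destruct b as [i c], b' as [i' c']. unfold push, post; simpl.
  intros (k & u & v & H). simpl in *. exists k, u, v. simpl.
  apply (cov_epi (Hcov k)).
  rewrite <- !comp_assoc, !Hnat, !comp_assoc. exact H.
Qed.

Lemma level_epi_pro (W : ProObj C A) (g g' : ProHom LY W) :
  pro_eq (pcomp g Phi) (pcomp g' Phi) -> pro_eq g g'.
Proof. intros H j. apply level_epi, H. Qed.

Lemma pbdata (i : I) : {P : C & {p1 : Hom P (X i) & {p2 : Hom P (X i) |
   is_pullback (phi i) (phi i) p1 p2}}}.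
Proof.
  destruct (constructive_indefinite_description _ (proj2 Hfl _ _ _ (phi i) (phi i))) as [P HP].
  destruct (constructive_indefinite_description _ HP) as [p1 HP1].
  destruct (constructive_indefinite_description _ HP1) as [p2 HP2].
  exact (existT _ P (existT _ p1 (exist _ p2 HP2))).
Qed.

Definition Lob i := projT1 (pbdata i).
Definition q1 i : Hom (Lob i) (X i) := projT1 (projT2 (pbdata i)).
Definition q2 i : Hom (Lob i) (X i) := proj1_sig (projT2 (projT2 (pbdata i))).
Lemma Hq i : is_pullback (phi i) (phi i) (q1 i) (q2 i).
Proof. exact (proj2_sig (projT2 (projT2 (pbdata i)))). Qed.

Lemma Lmap_data (i j : I) (u : Hom i j) : {m : Hom (Lob i) (Lob j) |
   comp (q1 j) m = comp (fmap X u) (q1 i) /\ comp (q2 j) m = comp (fmap X u) (q2 i)}.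
Proof.
  apply constructive_indefinite_description.
  destruct (Hq j) as [_ Hu].
  assert (E : comp (phi j) (comp (fmap X u) (q1 i)) = comp (phi j) (comp (fmap X u) (q2 i))).
  { rewrite !comp_assoc, <- Hnat, <- !comp_assoc, (proj1 (Hq i)). reflexivity. }
  destruct (Hu _ _ _ E) as (m & Hm & _). exists m; exact Hm.
Qed.

Definition Lmap (i j : I) (u : Hom i j) := proj1_sig (Lmap_data u).
Lemma Lmap1 i j (u : Hom i j) : comp (q1 j) (Lmap u) = comp (fmap X u) (q1 i).
Proof. exact (proj1 (proj2_sig (Lmap_data u))). Qed.
Lemma Lmap2 i j (u : Hom i j) : comp (q2 j) (Lmap u) = comp (fmap X u) (q2 i).
Proof. exact (proj2 (proj2_sig (Lmap_data u))). Qed.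

Lemma Lmap_id i : Lmap (idm i) = idm (Lob i).
Proof.
  apply (pb_uniq (Hq i)); rewrite ?Lmap1, ?Lmap2, fmap_id, comp_idl, comp_idr; reflexivity.
Qed.

Lemma Lmap_comp i j k (u : Hom j k) (v : Hom i j) : Lmap (comp u v) = comp (Lmap u) (Lmap v).
Proof.
  apply (pb_uniq (Hq k)).
  - rewrite Lmap1, comp_assoc, Lmap1, <- comp_assoc, Lmap1, comp_assoc, fmap_comp. reflexivity.
  - rewrite Lmap2, comp_assoc, Lmap2, <- comp_assoc, Lmap2, comp_assoc, fmap_comp. reflexivity.
Qed.

Definition Lfun : Functor I C := @Build_Functor I C Lob Lmap Lmap_id Lmap_comp.

Lemma nat_q1 : natural (X:=Lfun) (Y:=X) q1.
Proof. intros i j u. simpl. symmetry; apply Lmap1. Qed.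
Lemma nat_q2 : natural (X:=Lfun) (Y:=X) q2.
Proof. intros i j u. simpl. symmetry; apply Lmap2. Qed.

Notation LL := (level_obj (A:=A) HI HA Lfun).
Definition Pi1 := lvl nat_q1.
Definition Pi2 := lvl nat_q2.

Lemma Pi_eq : pro_eq (pcomp Phi Pi1) (pcomp Phi Pi2).
Proof.
  intro i. apply colim_rel_eq. unfold pcomp, rcomp; simpl.
  rewrite (proj1 (Hq i)). reflexivity.
Qed.

Lemma descent (W : ProObj C A) (G : ProHom LX W) :
  pro_eq (pcomp G Pi1) (pcomp G Pi2) -> exists h : ProHom LY W, pro_eq (pcomp h Phi) G.
Proof.
  intro HG.
  assert (Hex : forall j, exists e : colim_elt LY (pdiag W j),
             colim_rel (push (ph Phi) e) (ph G j)).
  { intro j. specialize (HG j). unfold pcomp, rcomp in HG; simpl in HG.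
    destruct (ph G j) as [i a]. simpl in HG.
    destruct HG as (k & u & v & Heq). change (Hom k i) in u, v. simpl in Heq.
    pose proof HI as HI'. destruct HI' as [_ [_ H3]]. destruct (H3 _ _ u v) as (k' & w & Hw).
    assert (Hb : comp (comp a (fmap X (comp u w))) (q1 k') =
                 comp (comp a (fmap X (comp u w))) (q2 k')).
    { assert (Heq' : comp (comp a (q1 i)) (Lmap (i:=k) (j:=i) u) =
                       comp (comp a (q2 i)) (Lmap (i:=k) (j:=i) v)) by exact Heq.
      transitivity (comp (comp (comp a (q1 i)) (Lmap u)) (Lmap w)).
      { rewrite <- !comp_assoc, <- Lmap1, Lmap_comp. reflexivity. }
      assert (Hw' : @comp (pidx LL) k' k i u w = comp v w) by exact Hw.
      rewrite Heq', Hw', <- !comp_assoc, <- Lmap2, Lmap_comp. reflexivity. }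
    destruct (cov_sheaf (Hcov k') (Hq k') Hb) as [c Hc].
    exists (existT _ k' c). unfold push, post; simpl. rewrite Hc.
    exists k', (idm _), (comp u w). simpl. rewrite fmap_id, comp_idr. reflexivity. }
  pose (h := fun j => proj1_sig (constructive_indefinite_description _ (Hex j))).
  assert (Hh : forall j, colim_rel (push (ph Phi) (h j)) (ph G j)).
  { intro j. exact (proj2_sig (constructive_indefinite_description _ (Hex j))). }
  assert (Hc : compat (F:=LY) (G:=W) h).
  { intros j j' t. apply level_epi. rewrite push_post.
    eapply colim_rel_trans; [apply post_congr, Hh|].
    eapply colim_rel_trans; [apply (ph_compat' G)|].
    apply colim_rel_sym, Hh. }
  exists (@Build_ProHom C A _ _ h Hc). intro j. apply Hh.
Qed.

End Site.
Unset Implicit Arguments.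

Theorem lemma6p4 (C : Category) (J : topology_data C) (A : Type)
    (HC : admissible J) (Halpha : infinite_type A)
    (V U W : ProObj C A) (f : ProHom V U) (Hf : pro_covering J f)
    (P : ProObj C A) (p1 p2 : ProHom P V) (HP : is_pro_pullback f f p1 p2) :
  (forall h : ProHom U W,
     raw_eq (rcomp (rcomp (ph h) (ph f)) (ph p1))
            (rcomp (rcomp (ph h) (ph f)) (ph p2))) /\
  (forall h h' : ProHom U W,
     raw_eq (rcomp (ph h) (ph f)) (rcomp (ph h') (ph f)) -> pro_eq h h') /\
  (forall g : ProHom V W,
     raw_eq (rcomp (ph g) (ph p1)) (rcomp (ph g) (ph p2)) ->
     exists h : ProHom U W, raw_eq (rcomp (ph h) (ph f)) (ph g)).
Proof.
  destruct HC as [[Hfl _] [Hsub _]].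
  destruct HP as [Hsq0 Hu].
  change (pro_eq (pcomp f p1) (pcomp f p2)) in Hsq0.
  split.
  { intro h. change (pro_eq (pcomp (pcomp h f) p1) (pcomp (pcomp h f) p2)).
    rewrite !pcomp_assoc, Hsq0. reflexivity. }
  destruct Hf as (I & HI & HA & X & Y & phi & Hnat & Hcov & iV & iU &
                  [jV [HjV1 HjV2]] & [jU [HjU1 HjU2]] & Hsq).
  change (pro_eq (pcomp jV iV) (pid V)) in HjV1.
  change (pro_eq (pcomp iV jV) (pid _)) in HjV2.
  change (pro_eq (pcomp jU iU) (pid U)) in HjU1.
  change (pro_eq (pcomp iU jU) (pid _)) in HjU2.
  change (pro_eq (pcomp iU f) (pcomp (Phi HI HA Hnat) iV)) in Hsq.
  assert (Hkey : pro_eq (pcomp f jV) (pcomp jU (Phi HI HA Hnat))).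
  { transitivity (pcomp (pcomp jU iU) (pcomp f jV)).
    { rewrite HjU1, pcomp_id_l. reflexivity. }
    rewrite pcomp_assoc, <- (pcomp_assoc iU f jV), Hsq, pcomp_assoc, HjV2, pcomp_id_r.
    reflexivity. }
  split.
  { intros h h' Hh. change (pro_eq (pcomp h f) (pcomp h' f)) in Hh.
    assert (E : pro_eq (pcomp (pcomp h jU) (Phi HI HA Hnat))
                       (pcomp (pcomp h' jU) (Phi HI HA Hnat))).
    { rewrite !pcomp_assoc, <- Hkey, <- !pcomp_assoc, Hh. reflexivity. }
    apply (level_epi_pro Hsub Hcov) in E.
    transitivity (pcomp h (pcomp jU iU)).
    { rewrite HjU1, pcomp_id_r. reflexivity. }
    rewrite <- pcomp_assoc, E, pcomp_assoc, HjU1, pcomp_id_r. reflexivity. }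
  intros g Hg. change (pro_eq (pcomp g p1) (pcomp g p2)) in Hg.
  pose (P1 := Pi1 (A:=A) HI HA Hnat Hfl). pose (P2 := Pi2 (A:=A) HI HA Hnat Hfl).
  destruct (Hu _ (pcomp jV P1) (pcomp jV P2)) as (m & [Hm1 Hm2] & _).
  { change (pro_eq (pcomp f (pcomp jV P1)) (pcomp f (pcomp jV P2))).
    rewrite <- !pcomp_assoc, Hkey, !pcomp_assoc.
    unfold P1, P2. rewrite Pi_eq. reflexivity. }
  change (pro_eq (pcomp p1 m) (pcomp jV P1)) in Hm1.
  change (pro_eq (pcomp p2 m) (pcomp jV P2)) in Hm2.
  destruct (@descent _ _ Hsub A _ HI HA _ _ _ Hnat Hcov Hfl W (pcomp g jV)) as [h' Hh'].
  { fold P1 P2. rewrite !pcomp_assoc, <- Hm1, <- Hm2, <- !pcomp_assoc, Hg. reflexivity. }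
  exists (pcomp h' iU). change (pro_eq (pcomp (pcomp h' iU) f) g).
  rewrite pcomp_assoc, Hsq, <- pcomp_assoc, Hh', pcomp_assoc, HjV1, pcomp_id_r.
  reflexivity.
Qed.
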